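(* Let $G$ be a finite Frobenius group with Frobenius kernel $N$ and Frobenius complement $H$. Then $$(1-t)B_G(t)=1+\frac{1}{|H|}\Big((1-t)B_N(t)-1\Big)+\Big((1-t)B_H(t)-1\Big).$$
   Context: A finite group $G$ is a Frobenius group if it has a proper non-trivial subgroup $H$ (a Frobenius complement) such that $H\cap gHg^{-1}=\{1\}$ for all $g\in G\setminus H$; the Frobenius kernel is $N=\left(G\setminus\bigcup_{g\in G}gHg^{-1}\right)\cup\{1\}$, a normal subgroup with $G=N\rtimes H$. For a finite group $G$ and $n\ge0$, let $G^{(n)}\subseteq G^n$ be the set of $n$-tuples of pairwise commuting elements, on which $G$ acts by simultaneous conjugation; let $\beta_{G,n}$ be the number of orbits and $B_G(t)=\sum_{n\ge0}\beta_{G,n}t^n$. *)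

(* Defs.v *)
From mathcomp Require Import all_boot all_algebra all_fingroup all_solvable frobenius.
Set Implicit Arguments. Unset Strict Implicit. Unset Printing Implicit Defensive.
Import GRing.Theory.

Section CommTuples.
Variable gT : finGroupType.
Local Open Scope group_scope.

Definition conj_tuple n (t : n.-tuple gT) (g : gT) : n.-tuple gT :=
  [tuple of map (fun x => x ^ g) t].

Definition comm_tuples (G : {set gT}) n : {set n.-tuple gT} :=
  [set t : n.-tuple gT | [forall i, tnth t i \in G] &&
     [forall i, forall j, tnth t i * tnth t j == tnth t j * tnth t i]].

Definition conj_orbit (G : {set gT}) n (t : n.-tuple gT) : {set n.-tuple gT} :=
  [set conj_tuple t g | g in G].

Definition beta (G : {set gT}) n : nat :=
  #|[set conj_orbit G t | t in comm_tuples G n]|.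
End CommTuples.

(* Formal power series with rational coefficients, as coefficient sequences *)
Definition fps := nat -> rat.
Local Open Scope ring_scope.
Definition Bseries (gT : finGroupType) (G : {set gT}) : fps :=
  fun n => (beta G n)%:R.
Definition mul_1mt (a : fps) : fps :=
  fun n => a n - (if n is k.+1 then a k else 0).
Definition fps_one : fps := fun n => if n is 0 then 1 else 0.
Definition fps_add (a b : fps) : fps := fun n => a n + b n.
Definition fps_sub (a b : fps) : fps := fun n => a n - b n.
Definition fps_scale (c : rat) (a : fps) : fps := fun n => c * a n.

(* Main.v *)
Require Import Defs.
From mathcomp Require Import all_boot all_algebra all_fingroup all_solvable frobenius.
From mathcomp Require Import ring.
From Stdlib Require Import FunctionalExtensionality.
Set Implicit Arguments. Unset Strict Implicit. Unset Printing Implicit Defensive.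

Section Aux.
Variable gT : finGroupType.
Local Open Scope group_scope.
Implicit Types (X : {group gT}).

Definition pcomm (s : seq gT) := all (fun x => all (fun y => x * y == y * x) s) s.

Lemma comm_tuplesE (A : {set gT}) n (t : n.-tuple gT) :
  (t \in comm_tuples A n) = all (mem A) t && pcomm t.
Proof.
rewrite inE; congr andb.
  apply/forallP/allP => [h x /tnthP [i ->] | h i]; [exact: h | exact/h/mem_tnth].
apply/forallP/allP => [h x /tnthP [i ->] | h i].
  by apply/allP => y /tnthP [j ->]; exact: (forallP (h i) j).
by apply/forallP => j; have /allP := h _ (mem_tnth i t); apply; apply: mem_tnth.
Qed.

Lemma conj_tuple1 n (t : n.-tuple gT) : conj_tuple t 1 = t.
Proof. by apply: val_inj; rewrite /= -[RHS]map_id; apply: eq_map => x; rewrite conjg1. Qed.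

Lemma conj_tupleM n (t : n.-tuple gT) x y :
  conj_tuple t (x * y) = conj_tuple (conj_tuple t x) y.
Proof. by apply: val_inj; rewrite /= -map_comp; apply: eq_map => z; rewrite /= conjgM. Qed.

Definition conj_act n := TotalAction (@conj_tuple1 n) (@conj_tupleM n).

Lemma pcomm_conj (s : seq gT) z : pcomm (map (conjg^~ z) s) = pcomm s.
Proof.
rewrite /pcomm all_map; apply: eq_all => x /=; rewrite all_map; apply: eq_all => y /=.
by rewrite -!conjMg (inj_eq (@conjg_inj _ z)).
Qed.

Lemma allX_conj (A : {group gT}) (s : seq gT) z : z \in A ->
  all (mem A) (map (conjg^~ z) s) = all (mem A) s.
Proof. by move=> Az; rewrite all_map; apply: eq_all => x /=; rewrite groupJr. Qed.

Lemma pcomm_cons a (t : seq gT) :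
  pcomm (a :: t) = all (fun y => a * y == y * a) t && pcomm t.
Proof.
rewrite /pcomm /= eqxx /= all_predI andbA.
have -> : all (fun x => x * a == a * x) t = all (fun y => a * y == y * a) t.
  by apply: eq_all => x; rewrite eq_sym.
by rewrite andbb.
Qed.

Lemma map_fix_all (f : gT -> gT) (s : seq gT) : (map f s == s) = all (fun x => f x == x) s.
Proof. by elim: s => //= x s IH; rewrite eqseq_cons IH. Qed.

Lemma conj_fixE (y a : gT) : (y ^ a == y) = (a * y == y * a).
Proof.
rewrite /conjg eq_sym; apply/eqP/eqP => h.
  by rewrite {1}h mulKVg.
by rewrite -h mulKg.
Qed.

Lemma beta_card X n : (beta X n * #|X| = #|comm_tuples X n.+1|)%N.
Proof.
have actsS : [acts X, on comm_tuples X n | conj_act n].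
  apply/actsP => g Xg t; rewrite !comm_tuplesE /=.
  by rewrite allX_conj // pcomm_conj.
have -> : beta X n = #|orbit (conj_act n) X @: comm_tuples X n|.
  by rewrite /beta; congr #|_|; apply: eq_imset.
rewrite -Frobenius_Cauchy //.
rewrite -sum1_card (partition_big (fun u : n.+1.-tuple gT => thead u) (mem X)) /=; last first.
  by move=> u; rewrite comm_tuplesE => /andP[/allP h _]; apply: h; case/tupleP: u => b t; rewrite theadE mem_head.
apply: eq_bigr => a Xa; rewrite sum1_card.
have cinj : injective (fun t : n.-tuple gT => [tuple of a :: t]).
  by move=> t1 t2 /(congr1 (fun u : n.+1.-tuple gT => behead u)) /= e; apply: val_inj.
rewrite -(card_imset _ cinj); apply: eq_card => u.
case/tupleP: u => b t; rewrite [RHS]unfold_in /= theadE.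
have [e|ne] := eqVneq b a; first subst b.
  rewrite andbT (mem_imset _ _ cinj) in_setI (sameP afix1P eqP) -val_eqE /= map_fix_all.
  rewrite !comm_tuplesE /= pcomm_cons Xa /=.
  rewrite (eq_all (fun y => conj_fixE y a)).
  by rewrite -andbA [pcomm _ && _]andbC.
rewrite andbF; apply/imsetP => [[t' _ e]].
by move/eqP: ne; apply; move/(congr1 (fun u : n.+1.-tuple gT => thead u)): e; rewrite !theadE.
Qed.

End Aux.

Section Frob.
Variable gT : finGroupType.
Local Open Scope group_scope.
Variables G N H : {group gT}.
Hypothesis frobG : [Frobenius G = N ><| H].

Definition one m : m.-tuple gT := [tuple of nseq m 1].
Definition SH m := comm_tuples H m :\ one m.
Definition img m := [set conj_tuple p.2 p.1 | p in setX N (SH m)].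

Lemma one_in (A : {group gT}) m : one m \in comm_tuples A m.
Proof.
by rewrite comm_tuplesE /pcomm /= !all_nseq /= group1 mulg1 eqxx !orbT.
Qed.

Lemma has_nt m (s : m.-tuple gT) : has (fun x => x != 1) s = (s != one m).
Proof.
rewrite (has_predC (pred1 1)) -val_eqE /=; congr negb.
apply/all_pred1P/eqP; by rewrite size_tuple.
Qed.

Lemma frob_facts :
  [/\ N \subset G, H \subset G, N :&: H = 1, N <| G &
      [/\ {in H^# & G, forall a g, (a ^ g \in H^#) = (g \in H)},
          {in H^#, forall x, 'C_G[x] \subset H},
          {in N^#, forall x, 'C_G[x] \subset N} &
          forall g, g \in G -> g \in N \/ exists2 y, y \in N & g ^ y^-1 \in H^#]].
Proof.
have [/eqP defG /andP[_ tiHG]] := andP frobG.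
have [nsNG sHG _ _ tiNH] := sdprod_context defG.
have [_ _ tiHG'] := normedTI_memJ_P tiHG.
split => //; first exact: normal_sub.
split => //; first exact: cent1_normedTI tiHG.
  exact: Frobenius_cent1_ker frobG.
move=> g Gg; have [/eqP cov _ _] := and3P (Frobenius_partition frobG).
move: Gg; rewrite -cov => /bigcupP [B /setU1P [-> | /imsetP [y Ny ->]]]; first by left.
by right; exists y => //; rewrite -mem_conjg.
Qed.


Lemma comm_tuplesS (A B : {set gT}) m :
  A \subset B -> comm_tuples A m \subset comm_tuples B m.
Proof.
move=> sAB; apply/subsetP => t; rewrite !comm_tuplesE => /andP[/allP h ->].
by rewrite andbT; apply/allP => x /h; apply: (subsetP sAB).
Qed.

Lemma SH_nt m s : s \in SH m -> exists2 a, a \in s & a \in H^#.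
Proof.
rewrite in_setD1 -has_nt => /andP [/hasP [a sa nta]].
rewrite comm_tuplesE => /andP [/allP aH _]; exists a => //.
by rewrite in_setD1 nta; apply: aH.
Qed.

Lemma img_sub m : img m \subset comm_tuples G m.
Proof.
have [sNG sHG tiNH nsNG [tiH cH cN part]] := frob_facts.
apply/subsetP => u /imsetP [[y s]]; rewrite in_setX /= => /andP [Ny Ss] ->.
move: Ss; rewrite in_setD1 => /andP [_]; rewrite !comm_tuplesE => /andP [aH pc].
rewrite /= pcomm_conj pc andbT allX_conj ?(subsetP sNG) //.
by apply/allP => x /(allP aH) /(subsetP sHG).
Qed.

Lemma cover_CG m : comm_tuples G m \subset comm_tuples N m :|: img m.
Proof.
have [sNG sHG tiNH nsNG [tiH cH cN part]] := frob_facts.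
apply/subsetP => t Ct; rewrite in_setU.
have [->|nt] := eqVneq t (one m); first by rewrite one_in.
have := nt; rewrite -has_nt => /hasP [a ta nta].
move: Ct; rewrite comm_tuplesE => /andP[allG pc].
have allG' : forall x, x \in t -> x \in G := fun x tx => allP allG x tx.
have Ga : a \in G := allG' a ta.
have cen : forall x, x \in t -> x \in 'C_G[a].
  move=> x tx; rewrite inE (allG' x tx) /=; apply/cent1P.
  exact/esym/eqP/(allP (allP pc a ta) x tx).
case: (part a Ga) => [Na | [y Ny Hay]].
  apply/orP; left; rewrite comm_tuplesE pc andbT; apply/allP => x tx.
  by apply: (subsetP (cN a _)) (cen x tx); rewrite in_setD1 nta.
apply/orP; right; apply/imsetP; exists (y, conj_tuple t y^-1); last first.
  by rewrite /= -conj_tupleM mulVg conj_tuple1.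
rewrite in_setX /= Ny /= in_setD1 -has_nt; apply/andP; split.
  apply/hasP; exists (a ^ y^-1); first exact: map_f.
  by rewrite conjg_eq1.
rewrite comm_tuplesE /= pcomm_conj pc andbT; apply/allP => _ /mapP [x tx ->].
apply: (subsetP (cH _ Hay)).
have Gy : y^-1 \in G by rewrite groupV (subsetP sNG).
rewrite inE groupJ ?(allG' x tx) //=; apply/cent1P.
case/setIP: (cen x tx) => _ /cent1P cxa.
by rewrite /commute -!conjMg cxa.
Qed.

Lemma disj_CN m : comm_tuples N m :&: img m = set0.
Proof.
have [sNG sHG tiNH nsNG [tiH cH cN part]] := frob_facts.
apply/setP => t; rewrite inE in_set0; apply/negP => /andP [CNt /imsetP [[y s]]].
rewrite in_setX /= => /andP [Ny Ss] et.
have [a sa] := SH_nt Ss; rewrite in_setD1 => /andP [nta Ha].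
move: CNt; rewrite comm_tuplesE => /andP [/allP aN _].
have Na : a \in N by rewrite -(groupJr _ Ny); apply: aN; rewrite et; apply: map_f.
have : a \in N :&: H by rewrite inE Na.
by rewrite tiNH inE (negPf nta).
Qed.

Lemma inj_img m : {in setX N (SH m) &, injective (fun p => conj_tuple p.2 p.1)}.
Proof.
have [sNG sHG tiNH nsNG [tiH cH cN part]] := frob_facts.
move=> [y s] [y' s']; rewrite !in_setX /= => /andP [Ny Ss] /andP [Ny' Ss'] e.
have e2 : conj_tuple s (y * y'^-1) = s'.
  by rewrite conj_tupleM e -conj_tupleM mulgV conj_tuple1.
have [a sa H1a] := SH_nt Ss.
have Ng : y * y'^-1 \in N by rewrite groupM ?groupV.
have Hg : y * y'^-1 \in H.
  rewrite -(tiH a) ?(subsetP sNG) // in_setD1 conjg_eq1.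
  move: H1a; rewrite in_setD1 => /andP [-> _] /=.
  move: Ss'; rewrite in_setD1 comm_tuplesE => /andP [_ /andP [/allP aH _]].
  by apply: aH; rewrite -e2; apply: map_f.
have : y * y'^-1 \in N :&: H by rewrite inE Ng.
rewrite tiNH inE -eq_mulgV1 => /eqP yy.
by rewrite -e2 yy mulgV conj_tuple1.
Qed.

Lemma card_CG m : #|comm_tuples G m| = (#|comm_tuples N m| + #|N| * #|SH m|)%N.
Proof.
have -> : comm_tuples G m = comm_tuples N m :|: img m.
  apply/eqP; rewrite eqEsubset cover_CG subUset img_sub comm_tuplesS //.
  by have [] := frob_facts.
by rewrite cardsU disj_CN cards0 subn0 card_in_imset ?cardsX //; apply: inj_img.
Qed.

Lemma card_CH m : #|comm_tuples H m| = (#|SH m|).+1.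
Proof. by rewrite (cardsD1 (one m)) one_in. Qed.

Lemma card_G : #|G| = (#|N| * #|H|)%N.
Proof. by have [/eqP defG _] := andP frobG; rewrite (sdprod_card defG). Qed.

End Frob.

Import GRing.Theory Num.Theory.
Local Open Scope ring_scope.

Lemma key_beta (gT : finGroupType) (G N H : {group gT}) n :
  [Frobenius G = N ><| H]%g ->
  ((beta G n)%:R = (beta N n)%:R / (#|H|%:R) + (beta H n)%:R - 1 / #|H|%:R :> rat).
Proof.
move=> frobG.
have eG := beta_card G n; have eN := beta_card N n; have eH := beta_card H n.
rewrite (card_CG frobG) (card_G frobG) in eG; rewrite card_CH -addn1 in eH.
move: eG eN eH => /(congr1 (fun k => k%:R : rat)) eG /(congr1 (fun k => k%:R : rat)) eN
  /(congr1 (fun k => k%:R : rat)) eH.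
rewrite /= !natrD !natrM in eG eN eH.
have hN : (#|N|%:R : rat) != 0 by rewrite pnatr_eq0 -lt0n cardG_gt0.
have hH : (#|H|%:R : rat) != 0 by rewrite pnatr_eq0 -lt0n cardG_gt0.
apply: (mulIf (mulf_neq0 hN hH)).
rewrite eG -eN.
have -> : (#|SH H n.+1|%:R : rat) = (beta H n)%:R * #|H|%:R - 1 by rewrite eH addrK.
by field.
Qed.

Theorem theorem9p3 (gT : finGroupType) (G N H : {group gT}) :
  [Frobenius G = N ><| H]%g ->
  mul_1mt (Bseries G) =
  fps_add fps_one
    (fps_add
       (fps_scale (#|H|%:R)^-1%R (fps_sub (mul_1mt (Bseries N)) fps_one))
       (fps_sub (mul_1mt (Bseries H)) fps_one)).
Proof.
move=> frobG.
have hH : (#|H|%:R : rat) != 0 by rewrite pnatr_eq0 -lt0n cardG_gt0.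
apply: functional_extensionality => n.
rewrite /mul_1mt /fps_add /fps_one /fps_scale /fps_sub /Bseries.
by case: n => [|k]; rewrite !(key_beta _ frobG); field.
Qed.
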